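(* Let $X$ be a Banach space and $k\in\mathbb{N}$, and assume $X$ admits a $k$-spreading model equivalent to the usual basis of $\ell^1$. Then for every $\varepsilon>0$ there exists a $k$-sequence $(y_s)_{s\in[\mathbb{N}]^k}$ in $X$ with $1-\varepsilon\le\|y_s\|\le1$ for all $s$, which generates a $k$-spreading model $(\widetilde e_n)_n$ satisfying $\|\sum_{i=1}^n a_i\widetilde e_i\|\ge(1-\varepsilon)\sum_{i=1}^n|a_i|$ for all $n$ and all reals $a_1,\dots,a_n$.
   Context: $[M]^k$: $k$-subsets of $M\subseteq\mathbb{N}$ (increasing enumerations, $M(l)$ the $l$-th element of $M$). A $k$-sequence in $X$ is a map $[\mathbb{N}]^k\to X$. Plegma family: $(s_j)_{j=1}^l$ in $[M]^k$ with $s_1(i)<\dots<s_l(i)$ ($i\le k$) and $s_l(i)<s_1(i+1)$ ($i<k$). $(x_s)_{s\in[M]^k}$ generates the Hamel basis $(e_n)$ of a seminormed space $(E,\|\cdot\|_* )$ as a $k$-spreading model if for a null sequence $\delta_l>0$: $|\|\sum_{j=1}^m a_jx_{s_j}\|-\|\sum_{j=1}^m a_je_j\|_*|\le\delta_l$ for all $m\le l$, plegma $(s_j)_{j=1}^m$ in $[M]^k$ with $s_1(1)\ge M(l)$, $a_j\in[-1,1]$. $X$ admits $(e_n)$ as a $k$-spreading model if some $k$-sequence in $X$ and some infinite $M$ generate it. *)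

(* Defs.v *)
From Stdlib Require Import Reals List Lra.
Open Scope R_scope.

Record SNSpace := {
  car :> Type;
  vzero : car;
  vadd : car -> car -> car;
  vopp : car -> car;
  vscal : R -> car -> car;
  snorm : car -> R;
  vadd_assoc : forall x y z, vadd x (vadd y z) = vadd (vadd x y) z;
  vadd_comm : forall x y, vadd x y = vadd y x;
  vadd_zero : forall x, vadd x vzero = x;
  vadd_opp : forall x, vadd x (vopp x) = vzero;
  vscal_one : forall x, vscal 1 x = x;
  vscal_assoc : forall a b x, vscal a (vscal b x) = vscal (a * b) x;
  vscal_distr_v : forall a x y, vscal a (vadd x y) = vadd (vscal a x) (vscal a y);
  vscal_distr_s : forall a b x, vscal (a + b) x = vadd (vscal a x) (vscal b x);
  snorm_triangle : forall x y, snorm (vadd x y) <= snorm x + snorm y;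
  snorm_homog : forall a x, snorm (vscal a x) = Rabs a * snorm x
}.

Arguments vzero {s}.
Arguments vadd {s}.
Arguments vopp {s}.
Arguments vscal {s}.
Arguments snorm {s}.

Definition is_banach (X : SNSpace) : Prop :=
  (forall x : X, snorm x = 0 -> x = vzero) /\
  (forall u : nat -> X,
     (forall eps, eps > 0 -> exists N, forall p q, (N <= p)%nat -> (N <= q)%nat ->
         snorm (vadd (u p) (vopp (u q))) < eps) ->
     exists x : X, forall eps, eps > 0 -> exists N, forall n, (N <= n)%nat ->
         snorm (vadd (u n) (vopp x)) < eps).

(** lincomb a v n = sum_{j=0}^{n-1} a_j v_j  (0-indexed: a_j here is a_{j+1} of the paper). *)
Fixpoint lincomb {X : SNSpace} (a : nat -> R) (v : nat -> X) (n : nat) : X :=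
  match n with
  | O => vzero
  | S n' => vadd (lincomb a v n') (vscal (a n') (v n'))
  end.

Fixpoint abssum (a : nat -> R) (n : nat) : R :=
  match n with
  | O => 0
  | S n' => abssum a n' + Rabs (a n')
  end.

Definition hamel_basis {E : SNSpace} (e : nat -> E) : Prop :=
  (forall (a : nat -> R) n, lincomb a e n = vzero -> forall j, (j < n)%nat -> a j = 0) /\
  (forall v : E, exists (a : nat -> R) n, v = lincomb a e n).

(** k-subsets of N: strictly increasing lists of length k; s(i) (1-indexed)
    is nth (i-1) s 0. A k-sequence in X is a map list nat -> X (only its
    values on k-subsets matter). *)
Definition kset (k : nat) (s : list nat) : Prop :=
  length s = k /\ forall i, (S i < k)%nat -> (nth i s 0 < nth (S i) s 0)%nat.

(** An infinite subset M of N, given by its increasing enumeration mM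
    (M(l) = mM (l-1)). *)
Definition incr_enum (mM : nat -> nat) : Prop := forall t, (mM t < mM (S t))%nat.

(** s_0, ..., s_{l-1} (paper: s_1..s_l) is a plegma family in [M]^k. *)
Definition plegma_in (k : nat) (mM : nat -> nat) (s : nat -> list nat) (l : nat) : Prop :=
  (forall j, (j < l)%nat -> kset k (s j) /\ forall x, In x (s j) -> exists t, mM t = x) /\
  (forall i j, (i < k)%nat -> (S j < l)%nat -> (nth i (s j) 0 < nth i (s (S j)) 0)%nat) /\
  (forall i, (S i < k)%nat -> (nth i (s (l - 1)%nat) 0 < nth (S i) (s 0%nat) 0)%nat).

Definition generates_ksm {X E : SNSpace} (k : nat) (x : list nat -> X) (mM : nat -> nat)
    (e : nat -> E) : Prop :=
  exists delta : nat -> R,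
    (forall l, delta l > 0) /\ Un_cv delta 0 /\
    forall (l m : nat) (s : nat -> list nat) (a : nat -> R),
      (1 <= l)%nat -> (1 <= m)%nat -> (m <= l)%nat ->
      plegma_in k mM s m ->
      (mM (l - 1)%nat <= nth 0 (s 0%nat) 0)%nat ->
      (forall j, (j < m)%nat -> -1 <= a j <= 1) ->
      Rabs (snorm (lincomb a (fun j => x (s j)) m) - snorm (lincomb a e m)) <= delta l.

Definition is_ksm {X E : SNSpace} (k : nat) (e : nat -> E) : Prop :=
  hamel_basis e /\
  exists (x : list nat -> X) (mM : nat -> nat), incr_enum mM /\ generates_ksm k x mM e.

Definition equiv_l1 {E : SNSpace} (e : nat -> E) : Prop :=
  exists c C, 0 < c /\ 0 < C /\ forall (a : nat -> R) n,
    c * abssum a n <= snorm (lincomb a e n) <= C * abssum a n.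

(* Main.v *)
Require Import Defs.
From Stdlib Require Import Reals List Lia Lra Arith.
From Stdlib Require Import Classical ClassicalEpsilon ProofIrrelevance FunctionalExtensionality.
Open Scope R_scope.

Lemma vadd_cancel {X : SNSpace} (x y : X) : vadd x y = x -> y = vzero.
Proof.
  intro H.
  transitivity (vadd (vadd y x) (vopp x)).
  - rewrite <- vadd_assoc, vadd_opp. symmetry. apply vadd_zero.
  - rewrite (vadd_comm X y x), H. apply vadd_opp.
Qed.

Lemma vscal_zero_l {X : SNSpace} (x : X) : vscal 0 x = vzero.
Proof.
  apply (vadd_cancel (vscal 0 x)).
  rewrite <- vscal_distr_s. f_equal. ring.
Qed.

Lemma vscal_zero_r {X : SNSpace} (c : R) : vscal c (@vzero X) = vzero.
Proof.
  apply (vadd_cancel (vscal c vzero)).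
  rewrite <- vscal_distr_v. now rewrite vadd_zero.
Qed.

Lemma vadd_zero_l {X : SNSpace} (x : X) : vadd vzero x = x.
Proof. rewrite vadd_comm. apply vadd_zero. Qed.

Lemma snorm_nonneg {X : SNSpace} (x : X) : 0 <= snorm x.
Proof.
  assert (H : vscal 0 x = vadd x (vscal (-1) x)).
  { rewrite <- (vscal_one X x) at 2. rewrite <- vscal_distr_s. f_equal. ring. }
  pose proof (snorm_triangle X x (vscal (-1) x)) as T.
  rewrite <- H, !snorm_homog in T. rewrite Rabs_R0 in T.
  replace (Rabs (-1)) with 1 in T by (unfold Rabs; destruct Rcase_abs; lra). lra.
Qed.

Lemma vadd4 {X : SNSpace} (a b c d : X) :
  vadd (vadd a b) (vadd c d) = vadd (vadd a c) (vadd b d).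
Proof.
  rewrite <- !vadd_assoc. f_equal. rewrite !vadd_assoc. f_equal. apply vadd_comm.
Qed.

Lemma lincomb_ext {X : SNSpace} (a b : nat -> R) (v w : nat -> X) n :
  (forall i, (i < n)%nat -> a i = b i) -> (forall i, (i < n)%nat -> v i = w i) ->
  lincomb a v n = lincomb b w n.
Proof.
  induction n; intros Ha Hv; simpl; auto.
  rewrite IHn by (intros; auto). rewrite Ha, Hv by lia. auto.
Qed.

Lemma lincomb_add_range {X : SNSpace} (a : nat -> R) (v : nat -> X) K n :
  lincomb a v (K + n) = vadd (lincomb a v K) (lincomb (fun i => a (K + i)%nat) (fun i => v (K + i)%nat) n).
Proof.
  induction n; simpl.
  - rewrite Nat.add_0_r, vadd_zero. auto.
  - rewrite Nat.add_succ_r. simpl. rewrite IHn. apply eq_sym, vadd_assoc.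
Qed.

Lemma lincomb_scal {X : SNSpace} c (a : nat -> R) (v : nat -> X) n :
  lincomb (fun i => c * a i) v n = vscal c (lincomb a v n).
Proof.
  induction n; simpl.
  - now rewrite vscal_zero_r.
  - rewrite IHn, vscal_distr_v, vscal_assoc. auto.
Qed.

Lemma lincomb_plus {X : SNSpace} (a b : nat -> R) (v : nat -> X) n :
  lincomb (fun i => a i + b i) v n = vadd (lincomb a v n) (lincomb b v n).
Proof.
  induction n; simpl.
  - now rewrite vadd_zero.
  - rewrite IHn, vscal_distr_s. apply vadd4.
Qed.

Lemma lincomb_vscal_vec {X : SNSpace} (b : nat -> R) c (v : nat -> X) m :
  lincomb b (fun j => vscal c (v j)) m = vscal c (lincomb b v m).
Proof.
  induction m; simpl.
  - now rewrite vscal_zero_r.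
  - rewrite IHm, vscal_distr_v, !vscal_assoc, Rmult_comm. auto.
Qed.

Lemma lincomb_zero_coef {X : SNSpace} (a : nat -> R) (v : nat -> X) n :
  (forall i, (i < n)%nat -> a i = 0) -> lincomb a v n = vzero.
Proof.
  induction n; intro H; simpl; auto.
  rewrite IHn by (intros; apply H; lia). rewrite H by lia.
  rewrite vscal_zero_l. apply vadd_zero.
Qed.

Lemma lincomb_stable {X : SNSpace} (a : nat -> R) (v : nat -> X) K K' :
  (forall p, (K <= p)%nat -> a p = 0) -> (K <= K')%nat -> lincomb a v K' = lincomb a v K.
Proof.
  intros H HK. replace K' with (K + (K' - K))%nat by lia.
  rewrite lincomb_add_range, (lincomb_zero_coef (fun i => a (K + i)%nat)).
  - apply vadd_zero.
  - intros. apply H. lia.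
Qed.

Lemma abssum_ext (a b : nat -> R) n :
  (forall i, (i < n)%nat -> Rabs (a i) = Rabs (b i)) -> abssum a n = abssum b n.
Proof.
  induction n; intro H; simpl; auto. rewrite IHn by (intros; auto). rewrite H by lia. auto.
Qed.

Lemma abssum_add_range (a : nat -> R) K n :
  abssum a (K + n) = abssum a K + abssum (fun i => a (K + i)%nat) n.
Proof.
  induction n; simpl.
  - rewrite Nat.add_0_r. ring.
  - rewrite Nat.add_succ_r. simpl. rewrite IHn. ring.
Qed.

Lemma abssum_scal c (a : nat -> R) n : abssum (fun i => c * a i) n = Rabs c * abssum a n.
Proof. induction n; simpl. ring. rewrite IHn, Rabs_mult. ring. Qed.

Lemma abssum_nonneg (a : nat -> R) n : 0 <= abssum a n.
Proof. induction n; simpl. lra. pose proof (Rabs_pos (a n)). lra. Qed.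

Lemma abs_le_abssum (a : nat -> R) n i : (i < n)%nat -> Rabs (a i) <= abssum a n.
Proof.
  induction n; intro H; simpl. lia.
  destruct (Nat.eq_dec i n).
  - subst. pose proof (abssum_nonneg a n). lra.
  - pose proof (Rabs_pos (a n)). assert (Rabs (a i) <= abssum a n) by (apply IHn; lia). lra.
Qed.

Lemma divmod_blk n j i : (i < n)%nat -> ((j * n + i) / n = j /\ (j * n + i) mod n = i)%nat.
Proof.
  intro H. split.
  - symmetry. apply (Nat.div_unique _ _ _ i); lia.
  - symmetry. apply (Nat.mod_unique _ _ j); lia.
Qed.

Lemma decomp_blk n m p : (1 <= n)%nat -> (p < m * n)%nat ->
  exists j i, (i < n)%nat /\ (j < m)%nat /\ p = (j * n + i)%nat.
Proof.
  intros Hn Hp. exists (p / n)%nat, (p mod n)%nat.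
  pose proof (Nat.div_mod_eq p n). pose proof (Nat.mod_upper_bound p n ltac:(lia)).
  split; [lia|]. split; [|lia].
  destruct (Nat.lt_ge_cases (p / n) m); auto. nia.
Qed.

Lemma lincomb_blk {X : SNSpace} n m (b a : nat -> R) (w : nat -> nat -> X) :
  (1 <= n)%nat ->
  lincomb (fun p => b (p / n)%nat * a (p mod n)%nat) (fun p => w (p / n)%nat (p mod n)%nat) (m * n)
  = lincomb b (fun j => lincomb a (w j) n) m.
Proof.
  intro Hn. induction m; [simpl; auto|].
  rewrite Nat.mul_succ_l, lincomb_add_range, IHm. simpl. f_equal.
  rewrite <- lincomb_scal. apply lincomb_ext; intros i Hi; destruct (divmod_blk n m i Hi) as [-> ->]; auto.
Qed.

Lemma abssum_blk n m (b a : nat -> R) :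
  (1 <= n)%nat ->
  abssum (fun p => b (p / n)%nat * a (p mod n)%nat) (m * n) = abssum b m * abssum a n.
Proof.
  intro Hn. induction m; [simpl; ring|].
  rewrite Nat.mul_succ_l, abssum_add_range, IHm. simpl.
  rewrite (abssum_ext (fun i => b ((m*n+i)/n)%nat * a ((m*n+i) mod n)%nat) (fun i => b m * a i)).
  - rewrite abssum_scal. ring.
  - intros i Hi; destruct (divmod_blk n m i Hi) as [-> ->]; auto.
Qed.

Lemma mM_lt (mM : nat -> nat) : incr_enum mM -> forall t1 t2, (t1 < t2)%nat -> (mM t1 < mM t2)%nat.
Proof.
  intros H t1 t2 Ht. induction t2. lia.
  destruct (Nat.eq_dec t1 t2). subst; apply H.
  specialize (IHt2 ltac:(lia)). specialize (H t2). lia.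
Qed.

Lemma mM_le (mM : nat -> nat) : incr_enum mM -> forall t1 t2, (t1 <= t2)%nat -> (mM t1 <= mM t2)%nat.
Proof.
  intros H t1 t2 Ht. destruct (Nat.eq_dec t1 t2). subst; lia.
  pose proof (mM_lt mM H t1 t2 ltac:(lia)). lia.
Qed.

Definition Tm (mM : nat -> nat) (n D i : nat) (s : list nat) : list nat :=
  map (fun q => mM (n * (q + D) + i)%nat) s.

Lemma nth_Tm mM n D i s r : (r < length s)%nat ->
  nth r (Tm mM n D i s) 0%nat = mM (n * (nth r s 0 + D) + i)%nat.
Proof.
  intro H. unfold Tm.
  rewrite (@nth_indep _ _ _ 0%nat (mM (n * (0 + D) + i)%nat)) by (rewrite length_map; auto).
  apply (map_nth (fun q => mM (n * (q + D) + i)%nat)).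
Qed.

Lemma plegma_blk k mM n D m (s : nat -> list nat) :
  incr_enum mM -> (1 <= n)%nat -> (1 <= m)%nat ->
  (forall j, (j < m)%nat -> kset k (s j)) ->
  (forall i j, (i < k)%nat -> (S j < m)%nat -> (nth i (s j) 0 < nth i (s (S j)) 0)%nat) ->
  (forall i, (S i < k)%nat -> (nth i (s (m - 1)%nat) 0 < nth (S i) (s 0%nat) 0)%nat) ->
  plegma_in k mM (fun p => Tm mM n D (p mod n) (s (p / n)%nat)) (m * n).
Proof.
  intros HM Hn Hm Hk H2 H3. split; [|split].
  - intros p Hp. destruct (decomp_blk n m p Hn Hp) as [j [i [Hi [Hj ->]]]].
    destruct (divmod_blk n j i Hi) as [-> ->].
    destruct (Hk j Hj) as [Hl Hinc]. split; [split|].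
    + unfold Tm. rewrite length_map. auto.
    + intros r Hr. rewrite !nth_Tm by lia.
      apply (mM_lt mM HM). specialize (Hinc r Hr). nia.
    + intros x Hx. unfold Tm in Hx. apply in_map_iff in Hx. destruct Hx as [q [<- _]]. eauto.
  - intros r p Hr Hp. destruct (decomp_blk n m p Hn ltac:(lia)) as [j [i [Hi [Hj ->]]]].
    destruct (divmod_blk n j i Hi) as [-> ->].
    destruct (Hk j Hj) as [Hl _].
    destruct (Nat.lt_ge_cases (S i) n) as [Hc|Hc].
    + replace (S (j * n + i)) with (j * n + S i)%nat by lia.
      destruct (divmod_blk n j (S i) Hc) as [-> ->].
      rewrite !nth_Tm by lia. apply (mM_lt mM HM). lia.
    + assert (Hj1 : (S j < m)%nat) by nia.
      replace (S (j * n + i)) with (S j * n + 0)%nat by nia.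
      destruct (divmod_blk n (S j) 0 ltac:(lia)) as [-> ->].
      destruct (Hk (S j) Hj1) as [Hl' _].
      rewrite !nth_Tm by lia. apply (mM_lt mM HM).
      specialize (H2 r j Hr Hj1). nia.
  - intros r Hr.
    replace (m * n - 1)%nat with ((m - 1) * n + (n - 1))%nat by nia.
    destruct (divmod_blk n (m - 1) (n - 1) ltac:(lia)) as [-> ->].
    rewrite Nat.Div0.div_0_l, Nat.Div0.mod_0_l.
    destruct (Hk (m - 1)%nat ltac:(lia)) as [Hl _].
    destruct (Hk 0%nat ltac:(lia)) as [Hl' _].
    rewrite !nth_Tm by lia. apply (mM_lt mM HM).
    specialize (H3 r Hr). nia.
Qed.

Definition fsupp (f : nat -> R) := exists N, forall p, (N <= p)%nat -> f p = 0.
Definition FS := {f : nat -> R | fsupp f}.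

Lemma fs_eq (u v : FS) : (forall p, proj1_sig u p = proj1_sig v p) -> u = v.
Proof.
  destruct u as [f hf], v as [g hg]; simpl; intro H.
  assert (f = g) by (apply functional_extensionality; auto). subst.
  f_equal. apply proof_irrelevance.
Qed.

Lemma fsupp_zero : fsupp (fun _ => 0).
Proof. exists 0%nat; auto. Qed.
Lemma fsupp_add f g : fsupp f -> fsupp g -> fsupp (fun p => f p + g p).
Proof. intros [N1 H1] [N2 H2]. exists (max N1 N2). intros p Hp. rewrite H1, H2 by lia. ring. Qed.
Lemma fsupp_scal c f : fsupp f -> fsupp (fun p => c * f p).
Proof. intros [N1 H1]. exists N1. intros p Hp. rewrite H1 by lia. ring. Qed.

Definition fs_zero : FS := exist _ _ fsupp_zero.
Definition fs_add (u v : FS) : FS := exist _ _ (fsupp_add _ _ (proj2_sig u) (proj2_sig v)).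
Definition fs_scal c (u : FS) : FS := exist _ _ (fsupp_scal c _ (proj2_sig u)).
Definition fs_opp (u : FS) : FS := fs_scal (-1) u.

Definition supp (u : FS) : nat := proj1_sig (constructive_indefinite_description _ (proj2_sig u)).
Lemma supp_spec (u : FS) : forall p, (supp u <= p)%nat -> proj1_sig u p = 0.
Proof. unfold supp. destruct constructive_indefinite_description. auto. Qed.

Definition blk (n : nat) (a : nat -> R) (h : nat -> R) (p : nat) : R := h (p / n)%nat * a (p mod n)%nat.

Definition fs_norm {E : SNSpace} (e : nat -> E) (n : nat) (a : nat -> R) (kap : R) (u : FS) : R := kap * snorm (lincomb (blk n a (proj1_sig u)) e (supp u * n)).

Lemma fs_norm_any {E : SNSpace} (e : nat -> E) (n : nat) (a : nat -> R) (kap : R) (hn : (1 <= n)%nat) (u : FS) N :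
  (forall p, (N <= p)%nat -> proj1_sig u p = 0) ->
  fs_norm e n a kap u = kap * snorm (lincomb (blk n a (proj1_sig u)) e (N * n)).
Proof.
  intro HN. unfold fs_norm.
  assert (G : forall M, (M <= max N (supp u))%nat -> (forall p, (M <= p)%nat -> proj1_sig u p = 0) ->
     lincomb (blk n a (proj1_sig u)) e (M * n) = lincomb (blk n a (proj1_sig u)) e (max N (supp u) * n)).
  { intros M HMl HM. symmetry. apply lincomb_stable; [|nia].
    intros p Hp. unfold blk. rewrite HM. ring.
    apply Nat.div_le_lower_bound; [lia|nia]. }
  rewrite (G N ltac:(lia) HN), (G (supp u) ltac:(lia) (supp_spec u)). auto.
Qed.

Definition mkE {E : SNSpace} (e : nat -> E) (n : nat) (a : nat -> R) (kap : R)
  (hn : (1 <= n)%nat) (hk : 0 <= kap) : SNSpace.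
Proof.
  refine (@Build_SNSpace FS fs_zero fs_add fs_opp fs_scal (fs_norm e n a kap) _ _ _ _ _ _ _ _ _ _);
  intros; try (apply fs_eq; intro p; simpl; ring).
  - set (N := max (supp x) (supp y)).
    rewrite !(fs_norm_any e n a kap hn _ N).
    + unfold blk; simpl. rewrite <- Rmult_plus_distr_l. apply Rmult_le_compat_l; auto.
      rewrite (lincomb_ext _ (fun p => blk n a (proj1_sig x) p + blk n a (proj1_sig y) p) _ e)
        by (intros; unfold blk; ring || auto).
      rewrite lincomb_plus. apply snorm_triangle.
    + intros p Hp; apply supp_spec; lia.
    + intros p Hp; apply supp_spec; lia.
    + intros p Hp; simpl; rewrite !supp_spec by lia; ring.
  - rewrite !(fs_norm_any e n a kap hn _ (supp x)).
    + unfold blk; simpl.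
      rewrite (lincomb_ext _ (fun p => a0 * blk n a (proj1_sig x) p) _ e)
        by (intros; unfold blk; ring || auto).
      rewrite lincomb_scal, snorm_homog. unfold blk. ring.
    + apply supp_spec.
    + intros p Hp; simpl; rewrite !supp_spec by lia; ring.
Defined.

Definition etv (j : nat) : FS.
Proof.
  refine (exist _ (fun p => if Nat.eqb p j then 1 else 0) _).
  exists (S j). intros p Hp. destruct (Nat.eqb_spec p j); [lia|auto].
Defined.

Lemma val_lincomb {E : SNSpace} (e : nat -> E) n a kap hn hk (b : nat -> R) m p :
  proj1_sig (@lincomb (mkE e n a kap hn hk) b etv m) p = if Nat.ltb p m then b p else 0.
Proof.
  induction m; simpl.
  - destruct (Nat.ltb_spec p 0); [lia|auto].
  - rewrite IHm. destruct (Nat.ltb_spec p m), (Nat.ltb_spec p (S m)), (Nat.eqb_spec p m);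
      try lia; subst; ring.
Qed.

Lemma hamel_etv {E : SNSpace} (e : nat -> E) n a kap hn hk :
  @hamel_basis (mkE e n a kap hn hk) etv.
Proof.
  split.
  - intros b m H j Hj. pose proof (f_equal (fun u : FS => proj1_sig u j) H) as H'.
    simpl in H'. rewrite val_lincomb in H'. destruct (Nat.ltb_spec j m); [auto|lia].
  - intros v. exists (proj1_sig v), (supp v). symmetry. apply fs_eq. intro p.
    rewrite val_lincomb. destruct (Nat.ltb_spec p (supp v)); auto.
    rewrite supp_spec; auto.
Qed.

Lemma norm_etv {E : SNSpace} (e : nat -> E) n a kap hn hk (b : nat -> R) m :
  @snorm (mkE e n a kap hn hk) (@lincomb (mkE e n a kap hn hk) b etv m) =
  kap * snorm (lincomb (fun p => b (p / n)%nat * a (p mod n)%nat) e (m * n)).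
Proof.
  simpl. rewrite (fs_norm_any e n a kap hn _ m).
  - f_equal. f_equal. apply lincomb_ext; auto. intros p Hp. unfold blk.
    rewrite val_lincomb. destruct (Nat.ltb_spec (p / n) m); auto.
    exfalso. assert (m <= p / n)%nat by auto.
    pose proof (Nat.div_mod_eq p n). pose proof (Nat.mod_upper_bound p n ltac:(lia)). nia.
  - intros p Hp. rewrite val_lincomb. destruct (Nat.ltb_spec p m); [lia|auto].
Qed.

Lemma approx {X E : SNSpace} k (x : list nat -> X) (mM : nat -> nat) (e : nat -> E) (delta : nat -> R)
  n D (a : nat -> R) m (s : nat -> list nat) (b : nat -> R) l :
  (forall (l m : nat) (s : nat -> list nat) (a : nat -> R),
      (1 <= l)%nat -> (1 <= m)%nat -> (m <= l)%nat ->
      plegma_in k mM s m ->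
      (mM (l - 1)%nat <= nth 0 (s 0%nat) 0)%nat ->
      (forall j, (j < m)%nat -> -1 <= a j <= 1) ->
      Rabs (snorm (lincomb a (fun j => x (s j)) m) - snorm (lincomb a e m)) <= delta l) ->
  incr_enum mM -> (1 <= n)%nat -> (1 <= k)%nat -> abssum a n = 1 -> (1 <= m)%nat ->
  (forall j, (j < m)%nat -> kset k (s j)) ->
  (forall i j, (i < k)%nat -> (S j < m)%nat -> (nth i (s j) 0 < nth i (s (S j)) 0)%nat) ->
  (forall i, (S i < k)%nat -> (nth i (s (m - 1)%nat) 0 < nth (S i) (s 0%nat) 0)%nat) ->
  (forall j, (j < m)%nat -> -1 <= b j <= 1) ->
  (1 <= l)%nat -> (m * n <= l)%nat -> (l - 1 <= (nth 0 (s 0%nat) 0 + D) * n)%nat ->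
  Rabs (snorm (lincomb b (fun j => lincomb a (fun i => x (Tm mM n D i (s j))) n) m)
        - snorm (lincomb (fun p => b (p / n)%nat * a (p mod n)%nat) e (m * n))) <= delta l.
Proof.
  intros Hgen HM Hn Hk Ha Hm Hks H2 H3 Hb Hl Hml HD.
  rewrite <- (lincomb_blk n m b a (fun j i => x (Tm mM n D i (s j))) Hn).
  apply (Hgen l (m * n)%nat (fun p => Tm mM n D (p mod n) (s (p / n)%nat))); auto.
  - nia.
  - apply plegma_blk; auto.
  - rewrite Nat.Div0.div_0_l, Nat.Div0.mod_0_l.
    destruct (Hks 0%nat ltac:(lia)) as [Hlen _].
    rewrite nth_Tm by lia. apply (mM_le mM HM). nia.
  - intros p Hp. destruct (decomp_blk n m p Hn Hp) as [j [i [Hi [Hj ->]]]].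
    destruct (divmod_blk n j i Hi) as [-> ->].
    assert (Rabs (a i) <= 1) by (rewrite <- Ha; apply abs_le_abssum; auto).
    specialize (Hb j Hj).
    assert (HH : Rabs (b j * a i) <= 1).
    { rewrite Rabs_mult. assert (Rabs (b j) <= 1) by (apply Rabs_le; lra).
      pose proof (Rabs_pos (b j)); pose proof (Rabs_pos (a i)). nra. }
    revert HH. unfold Rabs. destruct Rcase_abs; lra.
Qed.

Theorem mainTheorem10 (X : SNSpace) (HX : is_banach X) (k : nat) (hk : (1 <= k)%nat) :
  (exists (E : SNSpace) (e : nat -> E), @is_ksm X E k e /\ equiv_l1 e) ->
  forall eps : R, eps > 0 ->
  exists (y : list nat -> X),
    (forall s, kset k s -> 1 - eps <= snorm (y s) <= 1) /\
    exists (E : SNSpace) (et : nat -> E) (mM : nat -> nat),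
      hamel_basis et /\ incr_enum mM /\ generates_ksm k y mM et /\
      forall (n : nat) (a : nat -> R),
        snorm (lincomb a et n) >= (1 - eps) * abssum a n.
Proof.
  intros [E [e [[Hhb [x [mM [HM [delta [Hdp [Hdc Hgen]]]]]]] [c [C [hc [hC Heq]]]]]]] eps Heps.
  set (eps0 := Rmin eps 1).
  assert (He0 : 0 < eps0 <= 1 /\ eps0 <= eps).
  { unfold eps0, Rmin. destruct Rle_dec; lra. }
  set (eta := eps0 / 3).
  assert (Heta : 0 < eta /\ 3 * eta = eps0) by (unfold eta; lra).
  set (Sneg := fun z => exists n (a : nat -> R), abssum a n = 1 /\ z = - snorm (lincomb a e n)).
  destruct (completeness Sneg) as [m0 [Hub Hlub]].
  { exists (- c). intros z [n [a [Ha ->]]]. destruct (Heq a n) as [H1 _]. rewrite Ha in H1. lra. }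
  { exists (- snorm (lincomb (fun _ => 1) e 1)). exists 1%nat, (fun _ => 1). split; auto.
    simpl. rewrite Rabs_R1. ring. }
  set (r := - m0).
  assert (Hr1 : forall n a, abssum a n = 1 -> r <= snorm (lincomb a e n)).
  { intros n a Ha. assert (Sneg (- snorm (lincomb a e n))) by (exists n, a; auto).
    specialize (Hub _ H). unfold r. lra. }
  assert (Hrc : c <= r).
  { assert (m0 <= - c).
    { apply Hlub. intros z [n [a [Ha ->]]]. destruct (Heq a n) as [H1 _]. rewrite Ha in H1. lra. }
    unfold r. lra. }
  assert (Hex : exists n a, abssum a n = 1 /\ snorm (lincomb a e n) < r * (1 + eta)).
  { apply NNPP. intro Hn.
    assert (m0 <= - (r * (1 + eta))).
    { apply Hlub. intros z [n [a [Ha ->]]].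
      destruct (Rlt_or_le (snorm (lincomb a e n)) (r * (1 + eta))) as [Hlt|Hle].
      - exfalso. apply Hn. exists n, a. auto.
      - lra. }
    unfold r in *. nra. }
  assert (Hlow : forall N b, r * abssum b N <= snorm (lincomb b e N)).
  { intros N b. pose proof (abssum_nonneg b N) as Hs.
    destruct (Req_dec (abssum b N) 0) as [Hz|Hz].
    - rewrite Hz, Rmult_0_r. apply snorm_nonneg.
    - assert (Hb' : abssum (fun i => / abssum b N * b i) N = 1).
      { rewrite abssum_scal, Rabs_pos_eq. field. auto.
        apply Rlt_le, Rinv_0_lt_compat. lra. }
      specialize (Hr1 N _ Hb'). rewrite lincomb_scal, snorm_homog, Rabs_pos_eq in Hr1
        by (apply Rlt_le, Rinv_0_lt_compat; lra).
      apply (Rmult_le_compat_l (abssum b N)) in Hr1; [|lra].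
      rewrite <- Rmult_assoc, Rinv_r, Rmult_1_l in Hr1 by auto. lra. }
  destruct Hex as [n [a [Ha Hrho]]].
  assert (hn : (1 <= n)%nat) by (destruct n; [simpl in Ha; lra | lia]).
  set (rho := snorm (lincomb a e n)) in *.
  assert (Hrho1 : r <= rho) by (apply Hr1; auto).
  destruct (Hdc (eta * rho)) as [N0 HN0]; [nra|].
  set (D := S N0).
  set (kap := / (rho * (1 + eta))).
  assert (Hkap : 0 < kap /\ kap * (rho * (1 + eta)) = 1).
  { unfold kap. split. apply Rinv_0_lt_compat. nra. field. nra. }
  assert (hkap : 0 <= kap) by lra.
  set (W := fun s => lincomb a (fun i => x (Tm mM n D i s)) n).
  exists (fun s => vscal kap (W s)). split.
  - intros s Hs.
    pose proof (approx k x mM e delta n D a 1 (fun _ => s) (fun _ => 1) (D * n) Hgen HM hn hk Ha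
      ltac:(lia)) as Hap.
    destruct Hs as [Hlen Hinc].
    specialize (Hap ltac:(intros; split; auto) ltac:(intros; lia) ltac:(intros; simpl; auto)
      ltac:(intros; lra)).
    specialize (Hap ltac:(unfold D; nia) ltac:(unfold D; nia)).
    specialize (Hap ltac:(unfold D; simpl nth; nia)).
    simpl in Hap. rewrite vadd_zero_l, vscal_one, Nat.add_0_r in Hap.
    rewrite (lincomb_ext _ a _ e) in Hap.
    2: { intros p Hp. rewrite Nat.mod_small by auto. ring. }
    2: auto.
    fold (W s) in Hap. fold rho in Hap.
    assert (Hd : delta (D * n)%nat < eta * rho).
    { specialize (HN0 (D * n)%nat ltac:(unfold D; nia)). unfold R_dist in HN0.
      rewrite Rminus_0_r in HN0. pose proof (Rle_abs (delta (D * n)%nat)). lra. }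
    rewrite snorm_homog, Rabs_pos_eq by auto.
    assert (Hw : rho - eta * rho <= snorm (W s) <= rho + eta * rho).
    { replace (n + N0 * n)%nat with (D * n)%nat in Hap by (unfold D; simpl; lia). revert Hap. unfold Rabs. destruct Rcase_abs; intros; lra. }
    destruct Hkap as [Hk0 Hk1]. split; [|nra].
    assert (kap * rho * (1 - eta) >= 1 - eps0) by nra. nra.
  - exists (mkE e n a kap hn hkap), etv, S. split; [apply hamel_etv|]. split; [intro; lia|].
    split.
    + exists (fun L => kap * delta ((L + D) * n)%nat). split; [|split].
      * intro L. apply Rmult_lt_0_compat; [lra|apply Hdp].
      * intros eps1 Heps1. destruct (Hdc (eps1 / kap)) as [N1 HN1].
        { apply Rdiv_lt_0_compat; lra. }
        exists N1. intros L HL. specialize (HN1 ((L + D) * n)%nat ltac:(nia)).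
        unfold R_dist in *. rewrite Rminus_0_r in *. rewrite Rabs_mult, (Rabs_pos_eq kap) by lra.
        apply (Rmult_lt_compat_l kap) in HN1; [|lra].
        replace (kap * (eps1 / kap)) with eps1 in HN1 by (field; lra). lra.
      * intros L m s b HL1 Hm1 HmL Hpl Hfirst Hb.
        destruct Hpl as [Hp1 [Hp2 Hp3]].
        rewrite norm_etv. rewrite lincomb_vscal_vec, snorm_homog, (Rabs_pos_eq kap) by lra.
        rewrite <- Rmult_minus_distr_l, Rabs_mult, (Rabs_pos_eq kap) by lra.
        apply Rmult_le_compat_l; [lra|].
        apply (approx k x mM e delta n D a m s b ((L + D) * n)%nat Hgen HM hn hk Ha Hm1);
          auto; try nia.
        intros j Hj; apply (Hp1 j Hj).
    + intros N b. rewrite norm_etv.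
      pose proof (Hlow (N * n)%nat (fun p => b (p / n)%nat * a (p mod n)%nat)) as HL.
      rewrite abssum_blk, Ha, Rmult_1_r in HL by auto.
      pose proof (abssum_nonneg b N).
      destruct Hkap as [Hk0 Hk1].
      assert (Hkr : kap * r >= 1 - eps).
      { assert (kap * r * (1 + eta) * (1 + eta) > 1) by nra.
        assert ((1 + eta) * (1 + eta) * (1 - eps0) <= 1) by nra.
        nra. }
      nra.
Qed.
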